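(* Let an FCA with state set $S$, neighborhood $m=l+1+r$, local rule $f$ and boundary type $b\in\{\text{null},\text{periodic}\}$ be given, and let $G$ be its reversibility graph. Let $N$ be a negative vertex of $G$ with value $k\ge 1$, and let $C_1,\dots,C_i$ be circuits of $G$ passing through $N$, of lengths $r_1,\dots,r_i$. Then for all integers $x_1,\dots,x_i\ge 0$ the FCA is not $(k+x_1r_1+\dots+x_ir_i)$-cell-reversible.
   Context: A one-dimensional finite cellular automaton (FCA) is given by a state set $S=\{0,1,\dots,s-1\}$, integers $l,r\ge 0$ with neighborhood size $m=l+1+r\ge 2$, a local rule $f:S^m\to S$, and a boundary type $b\in\{\text{null},\text{periodic}\}$. For $n\ge 1$ the global map $\tau_n:S^n\to S^n$ sends $(x_0,\dots,x_{n-1})$ to $(y_0,\dots,y_{n-1})$ with $y_i=f(x_{i-l},\dots,x_{i+r})$, where for the null boundary $x_j=0$ whenever $j<0$ or $j>n-1$, and for the periodic boundary indices are taken modulo $n$. The FCA is $n$-cell-reversible if $\tau_n$ is a bijection (equivalently, since $S^n$ is finite, surjective). Reversibility graph (RG). Null boundary: vertices are subsets of $S^{m-1}$; the root is $N_0=\{(a_1,\dots,a_{m-1})\in S^{m-1}: a_1=\dots=a_l=0\}$; the acceptance set is $R=\{(a_1,\dots,a_{m-1})\in S^{m-1}: a_{m-r}=\dots=a_{m-1}=0\}$ (so $R=S^{m-1}$ if $r=0$); for a subset $N$ and $c\in S$, $\delta(N,c)=\{(a_1,\dots,a_{m-1})\in S^{m-1}:\exists a_0\in S,\ (a_0,\dots,a_{m-2})\in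 N,\ f(a_0,a_1,\dots,a_{m-1})=c\}$. Periodic boundary: vertices are subsets of $S^{m-1}\times S^{m-1}$; the root and the acceptance set are $N_0=R=\{(a,a):a\in S^{m-1}\}$; $\delta(N,c)=\{((a_1,\dots,a_{m-1}),(b_1,\dots,b_{m-1})):\exists b_0\in S,\ ((a_1,\dots,a_{m-1}),(b_0,\dots,b_{m-2}))\in N,\ f(b_0,\dots,b_{m-1})=c\}$. In both cases the RG is the directed graph whose vertex set consists of all subsets obtainable from $N_0$ by repeatedly applying $\delta$ (including $N_0$; equal subsets are the same vertex; the empty set may occur), with, for each vertex $N$ and each $c\in S$, an edge labelled $c$ from $N$ to $\delta(N,c)$. The value of a vertex $N$ is the length of a shortest directed path from $N_0$ to $N$. A vertex $N$ is negative if $N\cap R=\emptyset$. A circuit is an elementary directed cycle of the RG (a closed directed path with no repeated vertex other than its start = end; a loop is a circuit of length $1$); its length is its number of edges, and it passes through $N$ if $N$ is one of its vertices. *)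

(* Defs.v *)
From HB Require Import structures.
From mathcomp Require Import all_boot.
Set Implicit Arguments. Unset Strict Implicit. Unset Printing Implicit Defensive.

(* State set S = {0,...,s} = 'I_s.+1 (i.e. s.+1 >= 1 states, containing 0). *)
Notation St s := 'I_s.+1.

Inductive boundary := Null | Periodic.

Section FCA.
Variables (s l r : nat).
Local Notation S := (St s).
(* Local rule f : S^m -> S with m = l+1+r, written (l+r).+1;
   tuple index j corresponds to the neighbour x_{i-l+j}. *)
Variable f : (l + r).+1.-tuple S -> S.

(* value of cell p (integer i+j-l encoded by i+j >= l test) *)
Definition nbr (b : boundary) (n : nat) (x : n.-tuple S) (i j : nat) : S :=
  match b with
  | Null => if l <= i + j then nth ord0 x (i + j - l) else ord0
  | Periodic => nth ord0 x ((i + j + l * n - l) %% n)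
  end.

Definition tau (b : boundary) (n : nat) (x : n.-tuple S) : n.-tuple S :=
  [tuple f [tuple nbr b x i j | j < (l + r).+1] | i < n].

Definition reversible (b : boundary) (n : nat) : Prop := bijective (@tau b n).

Record rgraph := RGraph {
  rgT : finType;
  rg_root : {set rgT};
  rg_delta : {set rgT} -> S -> {set rgT};
  rg_acc : {set rgT} }.

Local Notation tup := ((l + r).-tuple S).

(* (a0, a_1, ..., a_{m-2}) from a0 and a = (a_1,...,a_{m-1}) *)
Definition shiftin (a0 : S) (a : tup) : tup := [tuple nth a0 (a0 :: a) j | j < l + r].

Definition null_root : {set tup} := [set a : tup | [forall j : 'I_(l + r), (j < l) ==> (tnth a j == ord0)]].
Definition null_acc : {set tup} := [set a : tup | [forall j : 'I_(l + r), (l <= j) ==> (tnth a j == ord0)]].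
Definition null_delta (N : {set tup}) (c : S) : {set tup} :=
  [set a : tup | [exists a0 : S, (shiftin a0 a \in N) && (f [tuple of a0 :: a] == c)]].

Definition per_root : {set tup * tup} := [set p : tup * tup | p.1 == p.2].
Definition per_delta (N : {set tup * tup}) (c : S) : {set tup * tup} :=
  [set p : tup * tup | [exists b0 : S,
     ((p.1, shiftin b0 p.2) \in N) && (f [tuple of b0 :: p.2] == c)]].

Definition RG (b : boundary) : rgraph :=
  match b with
  | Null => @RGraph tup null_root null_delta null_acc
  | Periodic => @RGraph (prod tup tup) per_root per_delta per_root
  end.

End FCA.

Section Graph.
Variables (s : nat) (G : rgraph s).
Local Notation V := {set rgT G}.

Definition rg_run (w : seq (St s)) : V := foldl (@rg_delta s G) (rg_root G) w.

Definition rg_value (N : V) (k : nat) : Prop :=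
  (exists w, size w = k /\ rg_run w = N) /\ (forall w, rg_run w = N -> k <= size w).

Definition rg_negative (N : V) : bool := N :&: rg_acc G == set0.

Definition rg_edge : rel V := fun u v => [exists c, rg_delta u c == v].

(* an elementary directed cycle, given by its (distinct) vertices in order;
   its length is size C *)
Definition rg_circuit (C : seq V) : bool := [&& C != [::], uniq C & cycle rg_edge C].
End Graph.

(* Main.v *)
Require Import Defs.
From HB Require Import structures.
From mathcomp Require Import all_boot.
From mathcomp Require Import zify.

Section Sound.
Set Implicit Arguments. Unset Strict Implicit.
Variables (s l r : nat) (f : (l + r).+1.-tuple 'I_s.+1 -> 'I_s.+1).
Local Notation S := 'I_s.+1.
Local Notation tup := ((l + r).-tuple S).

Lemma nbrE b n (x : n.-tuple S) i j : nbr l b x i j = nbr l b x 0 (i + j).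
Proof. by case: b. Qed.

Definition At b n (x : n.-tuple S) t : tup := [tuple nbr l b x 0 (t + j) | j < l + r].

Lemma nth_At b n (x : n.-tuple S) t k d : k < l + r ->
  nth d (At b x t) k = nbr l b x 0 (t + k).
Proof.
move=> H; have -> : k = Ordinal H by [].
by rewrite -tnth_nth tnth_mktuple.
Qed.

Lemma shiftin_At b n (x : n.-tuple S) t :
  shiftin (nbr l b x 0 t) (At b x t.+1) = At b x t.
Proof.
apply: eq_from_tnth => j; rewrite tnth_mktuple tnth_mktuple.
case: j => [[|k] Hk] /=; first by rewrite ?addn0.
by rewrite nth_At ?addSnnS //; lia.
Qed.

Lemma cons_At b n (x : n.-tuple S) t :
  [tuple of nbr l b x 0 t :: At b x t.+1] = [tuple nbr l b x t j | j < (l + r).+1].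
Proof.
apply: eq_from_tnth => j; rewrite tnth_mktuple (tnth_nth (nbr l b x 0 t)) [RHS]nbrE.
case: j => [[|k] Hk]; first by rewrite addn0.
rewrite [nth _ _ _]/= nth_At ?addSnnS //; lia.
Qed.

Lemma nth_tau b n (x : n.-tuple S) t : t < n ->
  nth ord0 (tau f b x) t = f [tuple nbr l b x t j | j < (l + r).+1].
Proof.
move=> H; have -> : t = Ordinal H by [].
by rewrite -tnth_nth tnth_mktuple.
Qed.

Lemma sound b n (x : n.-tuple S) : 0 < n ->
  exists a, a \in rg_run (RG f b) (tau f b x) :&: rg_acc (RG f b).
Proof.
move=> n0; set y := tau f b x.
have Hy : size y = n by rewrite size_tuple.
case: b @y Hy => y Hy.
- have ey : y = tau f Null x := erefl. clearbody y.
  have inv : forall t, t <= n -> At Null x t \in rg_run (RG f Null) (take t y).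
    elim=> [|t IH] Ht.
      rewrite take0 /rg_run /= inE; apply/forallP => j; apply/implyP => Hj.
      by rewrite tnth_mktuple /= leqNgt Hj.
    rewrite (take_nth ord0) ?Hy // /rg_run foldl_rcons /= inE.
    apply/existsP; exists (nbr l Null x 0 t).
    rewrite shiftin_At cons_At ey nth_tau // eqxx andbT.
    rewrite -ey; exact: IH (ltnW Ht).
  exists (At Null x n); rewrite inE.
  have := inv n (leqnn n); rewrite take_oversize ?Hy // => -> /=; rewrite inE.
  apply/forallP => j; apply/implyP => Hj.
  rewrite tnth_mktuple /= ifT; last by lia.
  by rewrite nth_default // size_tuple; lia.
- have ey : y = tau f Periodic x := erefl. clearbody y.
  have inv : forall t, t <= n -> (At Periodic x 0, At Periodic x t) \in rg_run (RG f Periodic) (take t y).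
    elim=> [|t IH] Ht.
      by rewrite take0 /rg_run /= inE.
    rewrite (take_nth ord0) ?Hy // /rg_run foldl_rcons /= inE.
    apply/existsP; exists (nbr l Periodic x 0 t).
    rewrite (_ : (At Periodic x 0, At Periodic x t.+1).1 = At Periodic x 0) // (_ : (At Periodic x 0, At Periodic x t.+1).2 = At Periodic x t.+1) //.
    rewrite shiftin_At cons_At ey nth_tau // eqxx andbT -ey.
    exact: IH (ltnW Ht).
  exists (At Periodic x 0, At Periodic x n); rewrite inE.
  have := inv n (leqnn n); rewrite take_oversize ?Hy // => -> /=; rewrite inE /=.
  apply/eqP/eq_from_tnth => j; rewrite !tnth_mktuple /=.
  have Hl : l <= l * n by rewrite leq_pmulr.
  set m := l * n in Hl *.
  have -> : n + j + m - l = (j + m - l) + n by lia.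
  by rewrite modnDr.
Qed.
End Sound.
Section GraphLemmas.
Variables (s : nat) (G : Defs.rgraph s).
Local Notation V := {set rgT G}.
Local Notation dl := (@rg_delta s G).

Lemma path_word (u : V) p : path (@rg_edge s G) u p ->
  exists w, size w = size p /\ foldl dl u w = last u p.
Proof.
elim: p u => [|v p IH] u /=; first by move=> _; exists [::].
case/andP=> /existsP[c /eqP Hc] /IH[w [Hs Hf]].
by exists (c :: w); rewrite /= Hs Hc Hf.
Qed.

Lemma circuit_word (C : seq V) (N : V) : rg_circuit C -> N \in C ->
  exists w, size w = size C /\ foldl dl N w = N.
Proof.
case/and3P=> _ _ Hc HN; case: (rot_to HN) => i s' Hr.
move: Hc; rewrite -(rot_cycle i) Hr /= => /path_word[w [Hs Hf]].
exists w; rewrite Hf last_rcons Hs size_rcons.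
by rewrite -(size_rot i C) Hr.
Qed.

Lemma rep_word (N : V) u x : foldl dl N u = N ->
  exists w, size w = x * size u /\ foldl dl N w = N.
Proof.
move=> Hu; elim: x => [|x [w [Hs Hf]]]; first by exists [::].
by exists (u ++ w); rewrite foldl_cat Hu Hf size_cat Hs mulSn.
Qed.

Lemma sum_word i (C : 'I_i -> seq V) (N : V) (x : 'I_i -> nat) :
  (forall j, rg_circuit (C j) /\ N \in C j) -> forall js : seq 'I_i,
  exists w, size w = \sum_(j <- js) x j * size (C j) /\ foldl dl N w = N.
Proof.
move=> HC; elim=> [|j js [w [Hs Hf]]]; first by exists [::]; rewrite big_nil.
have [HCj HNj] := HC j.
have [u [Hus Huf]] := @circuit_word (C j) N HCj HNj.
have [v [Hvs Hvf]] := @rep_word N u (x j) Huf.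
by exists (v ++ w); rewrite foldl_cat Hvf Hf size_cat big_cons Hvs Hs Hus.
Qed.
End GraphLemmas.

Theorem theorem3 (s l r : nat) (f : (l + r).+1.-tuple 'I_s.+1 -> 'I_s.+1)
  (b : boundary) (hm : 0 < l + r)
  (N : {set rgT (RG f b)}) (k : nat) :
  rg_value N k -> 1 <= k -> rg_negative N ->
  forall (i : nat) (C : 'I_i -> seq {set rgT (RG f b)}),
    (forall j, rg_circuit (C j) /\ N \in C j) ->
    forall x : 'I_i -> nat,
      ~ reversible f b (k + \sum_(j < i) x j * size (C j)).
Proof.
move=> [[w [Hws Hwr]] _] Hk Hneg i C HC x [g _ Hg].
have [W [HWs HWf]] := sum_word x HC (index_enum 'I_i).
pose n := k + \sum_(j < i) x j * size (C j).
have HY : size (w ++ W) == n by rewrite size_cat Hws HWs /n.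
set y0 : n.-tuple 'I_s.+1 := Tuple HY.
have n0 : 0 < n by rewrite /n; lia.
have [a Ha] := sound f b (g y0) n0.
move: Ha; rewrite Hg /= /rg_run foldl_cat.
rewrite -/(rg_run _ w) Hwr HWf.
by move/eqP: Hneg => ->; rewrite inE.
Qed.
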